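(* Let $q$ be a prime power, $m>3$, and $n=q^{2m}-1$. For an integer design distance $d\ge2$, the primitive narrow-sense bicyclic hyperbolic code $\mathscr{H}(n\times n,q^2;d)$ over $\mathbb{F}_{q^2}$ contains its Hermitian dual if and only if $d\le\delta_h$, where $$\delta_h=\begin{cases}(q^m-1)^2 & m\text{ odd},\\ q^{2m}-1-q^{m-1} & m\text{ even}.\end{cases}$$
   Context: Bicyclic codes over $\mathbb{F}_{q^2}$: linear subspaces of $\mathbb{F}_{q^2}^{n\times n}$ closed under cyclic shifts of rows and columns, identified with ideals of $\mathbb{F}_{q^2}[X,Y]/\langle X^n-1,Y^n-1\rangle$ via $c\mapsto\sum c_{i,j}X^iY^j$. Let $\alpha$ be a primitive $n$-th root of unity. The $q^2$-ary cyclotomic coset of $(x,y)$ is $\{(xq^{2k}\bmod n,yq^{2k}\bmod n):k\ge0\}$. $\mathscr{H}(n\times n,q^2;d)$ is the set of $c\in\mathbb{F}_{q^2}^{n\times n}$ with $c(\alpha^x,\alpha^y)=0$ for all $(x,y)$ in the union of the $q^2$-ary cyclotomic cosets of the elements of the designed set $Z_{des}=\{(x\bmod n,y\bmod n):1\le x,y\le n,\ xy<d\}$. The Hermitian dual of $C$ is $C^{\perp_h}=\{u\in\mathbb{F}_{q^2}^{n\times n}:\sum_{i,j}u_{i,j}^qc_{i,j}=0\ \forall c\in C\}$. *)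

(* Defs.v *)
From HB Require Import structures.
From mathcomp Require Import all_boot all_order all_algebra all_field.
Set Implicit Arguments. Unset Strict Implicit. Unset Printing Implicit Defensive.
Import GRing.Theory.
Local Open Scope ring_scope.

Definition prime_power (q : nat) : Prop :=
  exists p k : nat, [/\ prime p, (0 < k)%N & q = (p ^ k)%N].

Definition in_Zdes (n d x y : nat) : Prop :=
  exists x0 y0 : nat,
    [/\ (1 <= x0 <= n)%N, (1 <= y0 <= n)%N, (x0 * y0 < d)%N,
        x = (x0 %% n)%N & y = (y0 %% n)%N].

(* union of the Q-ary cyclotomic cosets of the elements of Z_des *)
Definition in_defset (Q n d x y : nat) : Prop :=
  exists x0 y0 k : nat,
    [/\ in_Zdes n d x0 y0, x = (x0 * Q ^ k %% n)%N & y = (y0 * Q ^ k %% n)%N].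

(* c(alpha^x, alpha^y) where c is viewed as sum c_{ij} X^i Y^j, coefficients
   mapped into the extension field L containing alpha via iota *)
Definition bieval (F L : fieldType) (iota : {rmorphism F -> L}) (alpha : L)
  (n : nat) (c : 'M[F]_n) (x y : nat) : L :=
  \sum_(i < n) \sum_(j < n) iota (c i j) * alpha ^+ (x * i) * alpha ^+ (y * j).

Definition in_hypcode (F L : fieldType) (iota : {rmorphism F -> L}) (alpha : L)
  (q n d : nat) (c : 'M[F]_n) : Prop :=
  forall x y : nat, in_defset (q ^ 2) n d x y -> bieval iota alpha c x y = 0.

Definition in_hdual (F : fieldType) (q n : nat) (C : 'M[F]_n -> Prop)
  (u : 'M[F]_n) : Prop :=
  forall c, C c -> \sum_(i < n) \sum_(j < n) (u i j) ^+ q * c i j = 0.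

Definition delta_h (q m : nat) : nat :=
  if odd m then ((q ^ m - 1) ^ 2)%N else (q ^ (2 * m) - 1 - q ^ (m - 1))%N.

(* Main.v *)
Require Import Defs.
From HB Require Import structures.
From mathcomp Require Import all_boot all_order all_algebra all_field.
From mathcomp Require Import zify.
From mathcomp.algebra_tactics Require Import ring.
Set Implicit Arguments. Unset Strict Implicit. Unset Printing Implicit Defensive.
Import GRing.Theory.

Module Comb.

Lemma lmr a b c : a <= b -> a * c <= b * c. Proof. by move=> h; apply: leq_mul. Qed.
Lemma lml a b c : a <= b -> c * a <= c * b. Proof. by move=> h; apply: leq_mul. Qed.

Lemma conc M x : 1 <= x -> x < M -> (M-1)*(M-1) <= x * (M*M - 1 - M*x).
Proof.
move=> x1 xM.
have [b ->] : exists b, M = x + b + 1 by exists (M - x - 1); lia.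
have e : (x + b + 1) * (x + b + 1) - 1 - (x + b + 1) * x = (x + b + 1) * b + x + b.
  rewrite !mulnDr !mulnDl. lia.
rewrite e. have : 1 * (b * b) <= x * (b * b) by apply: leq_mul.
rewrite !mulnDr !mulnDl. lia.
Qed.

Lemma caseB0 (q M T S d x h l : nat) :
  2 <= q -> 2 <= T -> T <= M -> T * S = M * M ->
  (q * T <= M \/ (T = M /\ d = (M - 1) * (M - 1))) ->
  d + 2 <= M * M -> d + T + 1 <= M * M ->
  1 <= x < M -> 1 <= h * T + l < M -> l < T ->
  d <= x * (M * M - 1 - h - l * S) \/ d <= (M * M - 1 - T * x) * (h * T + l).
Proof.
move=> q2 T2 TM TS hT d2 dT /andP[x1 xM] /andP[y1 yM] lT.
have TxM : T * x <= T * M by first [apply: lmr | apply: lml]; lia.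
case: (posnP h) => [h0|hpos].
- subst h. rewrite mul0n add0n in y1 yM *. rewrite subn0.
  case: hT => [qT|[TM' dd]].
  + have TM2 : 2 * T * M <= M * M.
      have : (2 * T) * M <= q * T * M by apply: lmr; apply: lmr.
      have : q * T * M <= M * M by apply: lmr.
      lia.
    case: (leqP 2 l) => l2.
    * right. have h2 : (M * M - 1 - T * x) * 2 <= (M * M - 1 - T * x) * l by apply: leq_mul.
      lia.
    * have l1' : l = 1 by lia. subst l.
      case: (leqP 2 x) => x2.
      -- left. have S2 : 2 * S <= T * S by first [apply: lmr | apply: lml]; lia.
         have h2 : 2 * (M * M - 1 - 1 * S) <= x * (M * M - 1 - 1 * S) by apply: leq_mul.
         lia.
      -- have -> : x = 1 by lia. right. lia.
  + subst T d.
    have SM : S = M by apply/eqP; rewrite -(eqn_pmul2l (_ : 0 < M)) ?TS //; lia.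
    subst S.
    case: (leqP l x) => lx.
    * left.
      have := conc x1 xM.
      have Hl : M * l <= M * x by apply: lml; lia.
      have : x * (M * M - 1 - M * x) <= x * (M * M - 1 - l * M).
        apply: leq_mul => //; lia.
      lia.
    * right.
      have := conc (_ : 1 <= l) (_ : l < M).
      have Hl : M * x <= M * l by apply: lml; lia.
      have : (M * M - 1 - M * l) * l <= (M * M - 1 - M * x) * l.
        apply: leq_mul => //; lia.
      rewrite (mulnC _ l). lia.
- right.
  case: hT => [qT|[TM' _]].
  + have TM2 : 2 * T * M <= M * M.
      have : (2 * T) * M <= q * T * M by apply: lmr; apply: lmr.
      have : q * T * M <= M * M by apply: lmr.
      lia.
    have hT0 : 1 * T <= h * T by apply: lmr; lia.
    have hT1 : T <= h * T + l by lia.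
    have h2 : (M * M - 1 - T * x) * T <= (M * M - 1 - T * x) * (h * T + l) by apply: leq_mul.
    have h3 : (M * M - 1 - T * x) * 2 <= (M * M - 1 - T * x) * T by apply: leq_mul.
    lia.
  + subst T. have hT0 : 1 * M <= h * M by apply: lmr; lia.
    lia.
Qed.
Lemma L1 (n T x x' : nat) : n %| x' + T * x -> 1 <= x' -> x' < n -> 1 <= x -> T * x < n -> x' = n - T * x.
Proof. move=> /dvdnP[k h] *. have k1 : k = 1.
  have : 0 < k by case: k h => //= h; lia.
  case: k h => // [][] // k h. rewrite !mulSn in h. lia.
subst k; lia. Qed.

Lemma caseA (q M T d x y x' y' : nat) :
  2 <= q -> 4 <= M -> 2 <= T -> T <= M ->
  (q * T <= M \/ (T = M /\ d = (M - 1) * (M - 1))) ->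
  1 <= x < M -> 1 <= y < M * M - 1 -> 1 <= x' < M -> 1 <= y' < M * M - 1 ->
  M * M - 1 %| x' + T * x -> M * M - 1 %| y' + T * y ->
  x * y < d -> x' * y' < d -> False.
Proof.
move=> q2 M4 T2 TM hT /andP[x1 xM] /andP[y1 yn] /andP[x'1 x'M] /andP[y'1 y'n] dx dy p1 p2.
have M4M : 4 * M <= M * M by apply: lmr.
have MM1 : M * (M - 1) = M * M - M by rewrite mulnBr muln1.
have MM2 : M * (M - 2) = M * M - 2 * M by rewrite mulnBr (mulnC M 2).
have TxM : T * x <= T * (M - 1) by apply: lml; lia.
have TM1 : T * (M - 1) < M * M - 1.
  have h : T * (M - 1) <= M * (M - 1) by apply: lmr. lia.
have Mn : M <= M * M - 1 by lia.
have ex := L1 dx x'1 (leq_trans x'M Mn) x1 (leq_ltn_trans TxM TM1).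
case: hT => [qT|[TM' dd]].
- have h1 : (2 * T) * M <= q * T * M by apply: lmr; apply: lmr.
  have h2 : q * T * M <= M * M by apply: lmr.
  have h3 : T * (M - 1) <= T * M by apply: lml; lia.
  rewrite mulnC in h3. lia.
- subst T d.
  have xe : x = M - 1.
    have h : M * x + M >= M * M by lia.
    have e : M * x + M = M * (x + 1) by rewrite mulnDr muln1.
    rewrite e in h.
    have : M <= x + 1 by rewrite -(leq_pmul2l (_ : 0 < M)) //; lia.
    lia.
  subst x.
  have yM : y < M - 1.
    rewrite -(ltn_pmul2l (_ : 0 < M - 1)) //; lia.
  have x'e : x' = M - 1 by lia.
  subst x'.
  have y'M : y' < M - 1.
    rewrite -(ltn_pmul2l (_ : 0 < M - 1)) //; lia.
  have My : M * y <= M * (M - 2) by apply: lml; lia.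
  have MyM : M * y < M * M - 1 by lia.
  have ey := L1 dy y'1 y'n y1 MyM.
  lia.
Qed.
Lemma dvd_shift (n T S N y y' : nat) : T * S = N -> N = n + 1 -> n %| y' + T * y -> n %| y + S * y'.
Proof.
move=> TS Nn /dvdnP[k h].
have : S * y' + N * y = (S * k) * n.
  by rewrite -TS (mulnC T S) -mulnA -mulnDr h mulnA.
rewrite Nn mulnDl mul1n => e.
apply/dvdnP; exists (S * k - y). rewrite mulnBl. lia.
Qed.

Lemma Ln1 (n z : nat) : n %| z -> 1 <= z -> z < 2 * n -> z = n.
Proof. move=> /dvdnP[k ->] h1 h2. case: k h1 h2 => [|[|k]] h1 h2; try lia.
Qed.

Lemma caseBfull (q M T S d x y x' y' : nat) :
  2 <= q -> 2 <= T -> T <= M -> M <= S -> T * S = M * M ->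
  (q * T <= M \/ (T = M /\ d = (M - 1) * (M - 1))) ->
  d + 2 <= M * M -> d + T + 1 <= M * M ->
  1 <= x < M -> 1 <= y < M * M - 1 -> 1 <= x' < M * M - 1 -> 1 <= y' < M ->
  M * M - 1 %| x' + T * x -> M * M - 1 %| y' + T * y ->
  x * y < d -> x' * y' < d -> False.
Proof.
move=> q2 T2 TM MS TS hT d2 dT /andP[x1 xM] /andP[y1 yn] /andP[x'1 x'n] /andP[y'1 y'M] dx dy p1 p2.
have M2 : 2 <= M by clear -T2 TM; lia.
have M4M : 2 * M <= M * M by apply: lmr.
have TM1 : T * x < M * M - 1.
  have h1 : T * x <= T * (M - 1) by apply: lml; clear -xM; lia.
  have h2 : T * (M - 1) <= M * (M - 1) by apply: lmr.
  have MM1 : M * (M - 1) = M * M - M by rewrite mulnBr muln1.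
  clear -h1 h2 MM1 M2 M4M; lia.
have ex := L1 dx x'1 x'n x1 TM1.
have Nn : M * M = (M * M - 1) + 1 by clear -M4M M2; lia.
have dy2 := dvd_shift TS Nn dy.
have [h [l [e lT]]] : exists h l, y' = h * T + l /\ l < T.
  by exists (y' %/ T), (y' %% T); split; [exact: divn_eq | rewrite ltn_mod; clear -T2; lia].
have hT' : h * T + l < M by rewrite -e.
have ey : y = M * M - 1 - h - l * S.
  have hM : h <= M - 1.
    have h1 : h * 1 <= h * T by apply: lml; clear -T2; lia.
    clear -h1 hT'; lia.
  have eS : y + S * y' = (y + h + l * S) + h * (M * M - 1).
    rewrite e mulnDr (mulnC S l) mulnCA (mulnC S T) TS mulnBr muln1.
    have h1 : h * 1 <= h * (M * M) by apply: lml; clear -M4M M2; lia.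
    clear -h1; lia.
  have dz : M * M - 1 %| y + h + l * S.
    have hd : M * M - 1 %| h * (M * M - 1) by apply: dvdn_mull.
    by move: dy2; rewrite eS (dvdn_addl _ hd).
  have lS : l * S <= (T - 1) * S by apply: lmr; clear -lT; lia.
  have TS1 : (T - 1) * S = M * M - S by rewrite mulnBl mul1n TS.
  have hl1 : 1 <= h + l * S.
    case: (posnP l) => l0.
      move: y'1; rewrite e l0 addn0 => h1. have : 1 <= h by case: (h) h1. clear; lia.
    have : 1 * 1 <= l * S by apply: leq_mul; clear -l0 MS M2; lia. clear; lia.
  have z1 : y + h + l * S = M * M - 1.
    apply: (Ln1 dz); first by clear -hl1; lia.
    clear -hM lS TS1 yn MS M2 M4M; lia.
  clear -z1; lia.
have hx : 1 <= x < M by rewrite x1 xM.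
have hy : 1 <= h * T + l < M by rewrite -e y'1 y'M.
have := caseB0 q2 T2 TM TS hT d2 dT hx hy lT.
rewrite -ey -ex -e. clear -p1 p2; lia.
Qed.

Definition dh (q m : nat) : nat :=
  if odd m then ((q ^ m - 1) ^ 2)%N else (q ^ (2 * m) - 1 - q ^ (m - 1))%N.

Lemma core_le (q m t x y x' y' : nat) : 2 <= q -> 3 < m -> odd t -> t <= m ->
  1 <= x < q ^ (2 * m) - 1 -> 1 <= y < q ^ (2 * m) - 1 ->
  1 <= x' < q ^ (2 * m) - 1 -> 1 <= y' < q ^ (2 * m) - 1 ->
  q ^ (2 * m) - 1 %| x' + q ^ t * x -> q ^ (2 * m) - 1 %| y' + q ^ t * y ->
  dh q m <= x * y \/ dh q m <= x' * y'.
Proof.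
move=> q2 m3 ot tm hx hy hx' hy' dx dy.
have NM : q ^ (2 * m) = q ^ m * q ^ m by rewrite mul2n -addnn expnD.
have TS : q ^ t * q ^ (2 * m - t) = q ^ m * q ^ m by rewrite -NM -expnD subnKC //; clear -tm; lia.
have M4 : 16 <= q ^ m.
  have h1 : 2 ^ 4 <= 2 ^ m by rewrite leq_exp2l //; clear -m3; lia.
  have h2 : 2 ^ m <= q ^ m by rewrite leq_exp2r //; clear -m3; lia.
  exact: leq_trans h1 h2.
have T2 : 2 <= q ^ t.
  have : q ^ 1 <= q ^ t by rewrite leq_pexp2l //; [clear -q2; lia | case: (t) ot].
  by rewrite expn1; apply: leq_trans.
have TM : q ^ t <= q ^ m by rewrite leq_pexp2l //; clear -q2; lia.
have MS : q ^ m <= q ^ (2 * m - t) by rewrite leq_pexp2l //; clear -q2 tm; lia.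
have m1 : q ^ (m - 1) <= q ^ m by rewrite leq_pexp2l //; clear -q2; lia.
have m0 : 1 <= q ^ (m - 1) by rewrite expn_gt0; clear -q2; lia.
have M4M : 16 * q ^ m <= q ^ m * q ^ m by apply: lmr.
have d2 : dh q m + 2 <= q ^ m * q ^ m.
  rewrite /dh NM; case: ifP => _.
    have e : (q ^ m - 1) ^ 2 = (q ^ m - 1) * (q ^ m - 1) by rewrite !expnS expn0 muln1.
    have e2 : (q ^ m - 1) * (q ^ m - 1) + 2 * q ^ m = q ^ m * q ^ m + 1.
      move: M4; move: (q ^ m) => M hM.
      have [b ->] : exists b, M = b + 1 by exists (M - 1); clear -hM; lia.
      rewrite addnK !mulnDr !mulnDl. clear; lia.
    rewrite e; clear -e2 M4; lia.
  clear -m0 m1 M4M; lia.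
have hT : q * q ^ t <= q ^ m \/ (q ^ t = q ^ m /\ dh q m = (q ^ m - 1) * (q ^ m - 1)).
  case: (ltnP t m) => tm'.
  - left. rewrite -expnS leq_pexp2l //; clear -q2 tm'; lia.
  - right. have e : t = m by clear -tm tm'; lia.
    subst t. split => //. by rewrite /dh ot !expnS expn0 muln1.
have dT : dh q m + q ^ t + 1 <= q ^ m * q ^ m.
  rewrite /dh NM; case: ifP => om.
    have e : (q ^ m - 1) ^ 2 = (q ^ m - 1) * (q ^ m - 1) by rewrite !expnS expn0 muln1.
    have e2 : (q ^ m - 1) * (q ^ m - 1) + 2 * q ^ m = q ^ m * q ^ m + 1.
      move: M4; move: (q ^ m) => M hM.
      have [b ->] : exists b, M = b + 1 by exists (M - 1); clear -hM; lia.
      rewrite addnK !mulnDr !mulnDl. clear; lia.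
    rewrite e; clear -e2 M4 TM; lia.
  have tm1 : t <= m - 1.
    case: (ltnP t m) => tm'; first by clear -tm'; lia.
    have e : t = m by clear -tm tm'; lia.
    by rewrite e om in ot.
  have : q ^ t <= q ^ (m - 1) by rewrite leq_pexp2l //; clear -q2; lia.
  clear -m0 m1 M4M; lia.
rewrite NM in hx hy hx' hy' dx dy.
move: (q ^ m) (q ^ t) (q ^ (2 * m - t)) (dh q m) M4 T2 TM MS M4M d2 hT dT TS hx hy hx' hy' dx dy.
move=> M T S d M4 T2 TM MS M4M d2 hT dT TS hx hy hx' hy' dx dy.
case: (leqP d (x * y)) => [|p1]; first by left.
case: (leqP d (x' * y')) => [|p2]; first by right.
exfalso.
have xyM : x < M \/ y < M.
  case: (ltnP x M) => ?; first by left. case: (ltnP y M) => ?; first by right.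
  have : M * M <= x * y by apply: leq_mul. clear -p1 d2; lia.
have xyM' : x' < M \/ y' < M.
  case: (ltnP x' M) => ?; first by left. case: (ltnP y' M) => ?; first by right.
  have : M * M <= x' * y' by apply: leq_mul. clear -p2 d2; lia.
have W : forall a b a' b', 1 <= a < M * M - 1 -> 1 <= b < M * M - 1 -> 1 <= a' < M * M - 1 ->
  1 <= b' < M * M - 1 -> M * M - 1 %| a' + T * a -> M * M - 1 %| b' + T * b ->
  a * b < d -> a' * b' < d -> a < M -> (a' < M \/ b' < M) -> False.
  move=> a b a' b' ha hb ha' hb' da db pa pb aM [a'M|b'M].
  - have M4' : 4 <= M by clear -M4; lia.
    have ha2 : 1 <= a < M by move/andP: ha => [-> _].
    have ha'2 : 1 <= a' < M by move/andP: ha' => [-> _].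
    exact: (caseA q2 M4' T2 TM hT ha2 hb ha'2 hb' da db pa pb).
  - have ha2 : 1 <= a < M by move/andP: ha => [-> _].
    have hb'2 : 1 <= b' < M by move/andP: hb' => [-> _].
    exact: (caseBfull q2 T2 TM MS TS hT d2 dT ha2 hb ha' hb'2 da db pa pb).
case: xyM => [xM|yM].
- exact: (W x y x' y').
- apply: (W y x y' x') => //; [rewrite mulnC | rewrite mulnC | by case: xyM'; [right|left]] => //.
Qed.

Lemma powN1 (N n k : nat) : N = n + 1 -> N ^ k = 1 %[mod n].
Proof. move=> ->. by rewrite -modnXm modnDl modnXm exp1n. Qed.

Lemma modMl (n a b c : nat) : a = b %[mod n] -> c * a = c * b %[mod n].
Proof. by move=> h; rewrite -modnMmr h modnMmr. Qed.
Lemma modMr (n a b c : nat) : a = b %[mod n] -> a * c = b * c %[mod n].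
Proof. by move=> h; rewrite -modnMml h modnMml. Qed.
Lemma modD (n a b c e : nat) : a = b %[mod n] -> c = e %[mod n] -> a + c = b + e %[mod n].
Proof. by move=> h1 h2; rewrite -modnDm h1 h2 modnDm. Qed.

Lemma dvd_mod (n a b : nat) : a = b %[mod n] -> (n %| a) = (n %| b).
Proof. by move=> h; rewrite /dvdn h. Qed.

Lemma core (q m t x y x' y' : nat) : 2 <= q -> 3 < m -> odd t ->
  1 <= x <= q ^ (2 * m) - 1 -> 1 <= y <= q ^ (2 * m) - 1 ->
  1 <= x' <= q ^ (2 * m) - 1 -> 1 <= y' <= q ^ (2 * m) - 1 ->
  q ^ (2 * m) - 1 %| x' + q ^ t * x -> q ^ (2 * m) - 1 %| y' + q ^ t * y ->
  dh q m <= x * y \/ dh q m <= x' * y'.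
Proof.
move=> q2 m3 ot hx hy hx' hy' dx dy.
set n := q ^ (2 * m) - 1 in hx hy hx' hy' dx dy.
have N16 : 16 <= q ^ (2 * m).
  have h1 : 2 ^ 4 <= 2 ^ (2 * m) by rewrite leq_exp2l //; clear -m3; lia.
  have h2 : 2 ^ (2 * m) <= q ^ (2 * m) by rewrite leq_exp2r //; clear -m3; lia.
  exact: leq_trans h1 h2.
have Nn : q ^ (2 * m) = n + 1 by rewrite /n; clear -N16; lia.
have dn : dh q m < n.
  rewrite /dh; case: ifP => _; last first.
    rewrite -/n. have : 0 < q ^ (m - 1) by rewrite expn_gt0; clear -q2; lia.
    clear -N16 Nn; lia.
  have e2 : (q ^ m - 1) ^ 2 < q ^ (2 * m) - 1.
    have -> : q ^ (2 * m) = q ^ m * q ^ m by rewrite mul2n -addnn expnD.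
    have M2 : 2 <= q ^ m.
      have h : q ^ 1 <= q ^ m by rewrite leq_pexp2l //; clear -q2 m3; lia.
      by rewrite expn1 in h; apply: leq_trans q2 h.
    rewrite !expnS expn0 muln1.
    move: M2; move: (q ^ m) => M hM.
    have [b ->] : exists b, M = b + 2 by exists (M - 2); clear -hM; lia.
    rewrite (_ : b + 2 - 1 = b + 1); last by clear; lia.
    rewrite !mulnDr !mulnDl. clear; lia.
  exact: e2.
case: (eqVneq x n) => [xn|xn].
  left; apply: leq_trans (ltnW dn) _; rewrite xn; have : n * 1 <= n * y by apply: lml; clear -hy; lia. by rewrite muln1.
case: (eqVneq y n) => [yn|yn].
  left; apply: leq_trans (ltnW dn) _; rewrite yn; have : 1 * n <= x * n by apply: lmr; clear -hx; lia. by rewrite mul1n.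
case: (eqVneq x' n) => [xn'|xn'].
  right; apply: leq_trans (ltnW dn) _; rewrite xn'; have : n * 1 <= n * y' by apply: lml; clear -hy'; lia. by rewrite muln1.
case: (eqVneq y' n) => [yn'|yn'].
  right; apply: leq_trans (ltnW dn) _; rewrite yn'; have : 1 * n <= x' * n by apply: lmr; clear -hx'; lia. by rewrite mul1n.
have hx2 : 1 <= x < n by move: hx xn; clear; lia.
have hy2 : 1 <= y < n by move: hy yn; clear; lia.
have hx'2 : 1 <= x' < n by move: hx' xn'; clear; lia.
have hy'2 : 1 <= y' < n by move: hy' yn'; clear; lia.
have m0 : 0 < 2 * m by clear -m3; lia.
set t' := t %% (2 * m).
have tt : t = t %/ (2 * m) * (2 * m) + t' := divn_eq t (2 * m).
have t'lt : t' < 2 * m by apply: ltn_pmod.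
have ot' : odd t'.
  move: ot; rewrite {1}tt oddD !oddM /= andbF /=. done.
have qt : q ^ t = q ^ t' %[mod n].
  rewrite {1}tt expnD (mulnC _ (2 * m)) expnM.
  by rewrite -modnMml (powN1 _ Nn) modnMml mul1n.
have dx' : n %| x' + q ^ t' * x.
  by rewrite -(dvd_mod (modD (erefl _) (modMr x qt))).
have dy' : n %| y' + q ^ t' * y.
  by rewrite -(dvd_mod (modD (erefl _) (modMr y qt))).
case: (leqP t' m) => tm.
  exact: (core_le q2 m3 ot' tm hx2 hy2 hx'2 hy'2 dx' dy').
have TS : q ^ t' * q ^ (2 * m - t') = n + 1 by rewrite -expnD subnKC ?Nn //; apply: ltnW.
have ds1 := dvd_shift TS (erefl _) dx'.
have ds2 := dvd_shift TS (erefl _) dy'.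
have os : odd (2 * m - t').
  rewrite oddB ?ot' ?oddM //=; by apply: ltnW.
have sm : 2 * m - t' <= m by clear -tm t'lt; lia.
have := core_le q2 m3 os sm hx'2 hy'2 hx2 hy2 ds1 ds2.
by case; [right|left].
Qed.

Definition Bad (q m d : nat) := exists X Y s t : nat,
  [/\ in_defset (q ^ 2) (q ^ (2 * m) - 1) d X Y, in_defset (q ^ 2) (q ^ (2 * m) - 1) d s t,
      (q ^ (2 * m) - 1 %| s + q * X) & (q ^ (2 * m) - 1 %| t + q * Y)].

Lemma bad_lt (q m d : nat) : 2 <= q -> 3 < m -> Bad q m d -> delta_h q m < d.
Proof.
move=> q2 m3 [X [Y [s [t [HXY Hst ds dt]]]]].
case: HXY => x0 [y0 [k [[a0 [b0 [ha0 hb0 pd0 ex0 ey0]]] eX eY]]].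
case: Hst => x1 [y1 [j [[a1 [b1 [ha1 hb1 pd1 ex1 ey1]]] es et]]].
subst x0 y0 x1 y1.
set n := q ^ (2 * m) - 1 in ha0 hb0 eX eY ha1 hb1 es et ds dt.
have N16 : 16 <= q ^ (2 * m).
  have h1 : 2 ^ 4 <= 2 ^ (2 * m) by rewrite leq_exp2l //; clear -m3; lia.
  have h2 : 2 ^ (2 * m) <= q ^ (2 * m) by rewrite leq_exp2r //; clear -m3; lia.
  exact: leq_trans h1 h2.
have Nn : q ^ (2 * m) = n + 1 by rewrite /n; clear -N16; lia.
set T := 1 + 2 * (k + (m * j - j)).
have oT : odd T by rewrite /T oddD oddM.
have jm : j <= m * j by rewrite leq_pmull //; clear -m3; lia.
set R := (q ^ 2) ^ (m * j - j).
have E1 : (q ^ 2) ^ j * R = (q ^ (2 * m)) ^ j.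
  by rewrite /R -expnD (subnKC jm) -!expnM mulnA.
have E2 : q * (q ^ 2) ^ k * R = q ^ T.
  by rewrite /R /T -!expnM -mulnA -expnD -expnS mulnDr add1n.
have key : forall (u v a b : nat), u = a %% n * (q ^ 2) ^ j %% n -> v = b %% n * (q ^ 2) ^ k %% n ->
    n %| u + q * v -> n %| a + q ^ T * b.
  move=> u v a b hu hv duv.
  have h : (u + q * v) * R = a + q ^ T * b %[mod n].
    rewrite mulnDl.
    apply: modD.
    - by rewrite hu modnMml -mulnA modnMml E1 -modnMmr (powN1 _ Nn) modnMmr muln1.
    - have hv' : v = b * (q ^ 2) ^ k %[mod n] by rewrite hv modn_mod modnMml.
      rewrite (modMr R (modMl q hv')) -E2; congr (_ %% n); clear; lia.
  by rewrite -(dvd_mod h); apply: dvdn_mulr.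
have dx := key _ _ _ _ es eX ds.
have dy := key _ _ _ _ et eY dt.
have := core q2 m3 oT ha0 hb0 ha1 hb1 dx dy.
rewrite /dh -/(delta_h q m).
case=> h; [exact: leq_ltn_trans h pd0 | exact: leq_ltn_trans h pd1].
Qed.

Lemma defsetI (Q n d a b k : nat) : 1 <= a <= n -> 1 <= b <= n -> a * b < d ->
  in_defset Q n d (a %% n * Q ^ k %% n) (b %% n * Q ^ k %% n).
Proof. move=> ha hb hd. exists (a %% n), (b %% n), k; split => //. by exists a, b; split. Qed.

Lemma lt_bad (q m d : nat) : 2 <= q -> 3 < m -> delta_h q m < d -> Bad q m d.
Proof.
move=> q2 m3 hd.
have NM : q ^ (2 * m) = q ^ m * q ^ m by rewrite mul2n -addnn expnD.
have M16 : 16 <= q ^ m.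
  have h1 : 2 ^ 4 <= 2 ^ m by rewrite leq_exp2l //; clear -m3; lia.
  have h2 : 2 ^ m <= q ^ m by rewrite leq_exp2r //; clear -m3; lia.
  exact: leq_trans h1 h2.
have MM : 16 * q ^ m <= q ^ m * q ^ m by apply: lmr.
move: hd; rewrite /delta_h /Bad NM.
case: ifP => om hd.
- set M := q ^ m in M16 MM hd *.
  set k := m./2.
  have mk : m = (2 * k).+1.
    have h := odd_double_half m. rewrite om -mul2n -/k in h. clear -h; lia.
  have qQ : q * (q ^ 2) ^ k = M by rewrite /M -expnM -expnS mk.
  have hM : 1 <= M - 1 <= M * M - 1 by clear -MM M16; lia.
  have hdd : (M - 1) * (M - 1) < d by move: hd; rewrite !expnS expn0 muln1.
  exists ((M - 1) %% (M * M - 1) * (q ^ 2) ^ k %% (M * M - 1)), ((M - 1) %% (M * M - 1) * (q ^ 2) ^ k %% (M * M - 1)),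
    ((M - 1) %% (M * M - 1) * (q ^ 2) ^ 0 %% (M * M - 1)), ((M - 1) %% (M * M - 1) * (q ^ 2) ^ 0 %% (M * M - 1)).
  have dv : M * M - 1 %| (M - 1) %% (M * M - 1) * (q ^ 2) ^ 0 %% (M * M - 1) +
      q * ((M - 1) %% (M * M - 1) * (q ^ 2) ^ k %% (M * M - 1)).
    have h : (M - 1) %% (M * M - 1) * (q ^ 2) ^ 0 %% (M * M - 1) +
      q * ((M - 1) %% (M * M - 1) * (q ^ 2) ^ k %% (M * M - 1)) = (M - 1) + q * ((M - 1) * (q ^ 2) ^ k) %[mod M * M - 1].
      apply: modD; first by rewrite expn0 muln1 !modn_mod.
      by apply: modMl; rewrite modn_mod modnMml.
    rewrite (dvd_mod h) mulnCA qQ.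
    have -> : M - 1 + (M - 1) * M = M * M - 1.
      have e : (M - 1) * M = M * M - M by rewrite mulnBl mul1n.
      rewrite e; clear -e MM M16; lia.
    exact: dvdnn.
  by split => //; apply: defsetI.
- set M := q ^ m in M16 MM hd *.
  set k := (m - 2)./2.
  have mk : m = (2 * k).+2.
    have em : ~~ odd (m - 2) by rewrite oddB ?om //; clear -m3; lia.
    have h := odd_double_half (m - 2). rewrite (negbTE em) add0n -mul2n -/k in h.
    clear -h m3; lia.
  set A := q ^ (m - 1) in hd *.
  have qQ : q * (q ^ 2) ^ k = A by rewrite /A -expnM -expnS mk.
  have AqM : A * q = M by rewrite /A /M -expnSr; congr (_ ^ _); clear -m3; lia.
  have A8 : 8 <= A.
    have h1 : 2 ^ 3 <= 2 ^ (m - 1) by rewrite leq_exp2l //; clear -m3; lia.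
    have h2 : 2 ^ (m - 1) <= q ^ (m - 1) by rewrite leq_exp2r //; clear -m3; lia.
    exact: leq_trans h1 h2.
  have AM : A <= M by rewrite -AqM leq_pmulr //; clear -q2; lia.
  have qMn : 2 * (q * M) <= M * M.
    have e : M * M = A * (q * M) by rewrite -{1}AqM mulnA.
    rewrite e; apply: lmr; clear -A8; lia.
  have qM1 : 1 <= q * M by rewrite muln_gt0; apply/andP; split; clear -q2 M16; lia.
  set n := M * M - 1 in hd *.
  have qMM : M <= q * M by rewrite leq_pmull //; clear -q2; lia.
  have Nn : M * M = n + 1 by rewrite /n; clear -MM M16; lia.
  exists (1 %% n * (q ^ 2) ^ k %% n), ((n - q * M) %% n * (q ^ 2) ^ k %% n),
    ((n - A) %% n * (q ^ 2) ^ 0 %% n), (1 %% n * (q ^ 2) ^ 0 %% n).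
  split.
  + apply: defsetI; rewrite ?mul1n; clear -qMn Nn qM1 hd AM qMM M16; lia.
  + apply: defsetI; rewrite ?muln1; clear -Nn A8 AM MM hd; lia.
  + have h : (n - A) %% n * (q ^ 2) ^ 0 %% n + q * (1 %% n * (q ^ 2) ^ k %% n) = (n - A) + q * (1 * (q ^ 2) ^ k) %[mod n].
      apply: modD; first by rewrite expn0 muln1 !modn_mod.
      by apply: modMl; rewrite modn_mod modnMml.
    rewrite (dvd_mod h) mul1n qQ subnK; first exact: dvdnn.
    clear -Nn AM MM; lia.
  + have h : 1 %% n * (q ^ 2) ^ 0 %% n + q * ((n - q * M) %% n * (q ^ 2) ^ k %% n) = 1 + q * ((n - q * M) * (q ^ 2) ^ k) %[mod n].
      apply: modD; first by rewrite expn0 muln1 !modn_mod.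
      by apply: modMl; rewrite modn_mod modnMml.
    rewrite (dvd_mod h) mulnCA qQ.
    have -> : 1 + (n - q * M) * A = (A - 1) * n.
      have e1 : (n - q * M) * A = A * n - A * (q * M) by rewrite mulnC mulnBr.
      have e2 : (A - 1) * n = A * n - n by rewrite mulnBl mul1n.
      have e3 : A * (q * M) = n + 1 by rewrite mulnA AqM Nn.
      have e4 : A * (q * M) <= A * n by apply: lml; clear -qMn Nn qM1; lia.
      have e5 : 1 * n <= A * n by apply: lmr; clear -A8; lia.
      rewrite e1 e2; clear -e3 e4 e5; lia.
    exact: dvdn_mull.
Qed.

End Comb.
Import Comb.

Module Alg.
Local Open Scope ring_scope.

Lemma geo (L : fieldType) (a : L) (n z : nat) : n.-primitive_root a ->
  \sum_(i < n) a ^+ (z * i) = if (n %| z)%N then n%:R else 0.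
Proof.
move=> pa; case: ifP => hz.
- have az : a ^+ z = 1 by apply/eqP; rewrite -(prim_order_dvd pa).
  under eq_bigr => i _ do rewrite exprM az expr1n.
  by rewrite sumr_const card_ord.
- have az : a ^+ z != 1 by rewrite -(prim_order_dvd pa) hz.
  have : (a ^+ z - 1) * \sum_(i < n) (a ^+ z) ^+ i = 0.
    by rewrite -subrX1 -exprM mulnC exprM (prim_expr_order pa) expr1n subrr.
  move/eqP; rewrite mulf_eq0 subr_eq0 (negbTE az) /= => /eqP h.
  rewrite -[RHS]h; apply: eq_bigr => i _; by rewrite exprM.
Qed.

Lemma expr_cong (L : fieldType) (a : L) (n x y : nat) : n.-primitive_root a ->
  (x = y %[mod n])%N -> a ^+ x = a ^+ y.
Proof. by move=> pa h; rewrite -(prim_expr_mod pa) h (prim_expr_mod pa). Qed.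

Lemma bieval_cong (F L : fieldType) (iota : {rmorphism F -> L}) (a : L) (n : nat)
  (c : 'M[F]_n) x1 y1 x2 y2 : n.-primitive_root a ->
  (x1 = x2 %[mod n])%N -> (y1 = y2 %[mod n])%N -> bieval iota a c x1 y1 = bieval iota a c x2 y2.
Proof.
move=> pa hx hy; rewrite /bieval; apply: eq_bigr => i _; apply: eq_bigr => j _.
congr (_ * _ * _); apply: expr_cong pa _.
- by rewrite -modnMml hx modnMml.
- by rewrite -modnMml hy modnMml.
Qed.

Lemma frob_sum (L : fieldType) (q : nat) (hq : [pchar L].-nat q) (I : Type) (r : seq I) (P : pred I) (f : I -> L) :
  (\sum_(i <- r | P i) f i) ^+ q = \sum_(i <- r | P i) f i ^+ q.
Proof.
have q0 : (0 < q)%N by move: hq; rewrite /pnat => /andP[].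
apply: (big_morph (fun x : L => x ^+ q)).
- by move=> x y; rewrite exprDn_pchar.
- by rewrite expr0n; case: (q) q0.
Qed.

Lemma nz_lemma (L : fieldType) (a : L) (m Q : nat) (V : nat -> L) :
  (1 < Q)%N -> (1 < m)%N -> (Q ^ m - 1).-primitive_root a ->
  (forall g : nat, (g < Q ^ m - 1)%N -> \sum_(k < m) V k * a ^+ (g * Q ^ k) = 0) -> V 0%N = 0.
Proof.
move=> Q1 m0 pa H.
set n := (Q ^ m - 1)%N.
pose P : {poly L} := \sum_(k < m) V k *: 'X^(Q ^ k).
have rootP : forall g, (g < n)%N -> root P (a ^+ g).
  move=> g hg; rewrite /root /P horner_sum.
  under eq_bigr => k _ do rewrite hornerZ hornerXn -exprM.
  by apply/eqP; apply: H.
have szP : (size P <= n)%N.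
  rewrite /P; apply: (leq_trans (size_sum _ _ _)).
  apply/bigmax_leqP => k _.
  apply: (leq_trans (size_scale_leq _ _)); rewrite size_polyXn.
  have : (Q ^ k <= Q ^ m.-1)%N by rewrite leq_pexp2l //; [lia | case: (k) => /= k' ?; lia].
  have e : (Q ^ m = Q * Q ^ m.-1)%N by rewrite -expnS prednK //; lia.
  have h2 : (Q ^ 1 <= Q ^ m.-1)%N by rewrite leq_pexp2l //; lia.
  have h3 : (2 * Q ^ m.-1 <= Q * Q ^ m.-1)%N by apply: leq_mul.
  rewrite expn1 in h2.
  rewrite /n; lia.
have P0 : P = 0.
  apply: (roots_geq_poly_eq0 (rs := [seq a ^+ g | g <- iota 0 n])).
  - by apply/allP => z /mapP[g]; rewrite mem_iota add0n => /andP[_ hg] ->; apply: rootP.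
  - rewrite map_inj_in_uniq ?iota_uniq // => i j; rewrite !mem_iota !add0n => /andP[_ hi] /andP[_ hj].
    by move/eqP; rewrite (eq_prim_root_expr pa) !modn_small // => /eqP.
  - by rewrite size_map size_iota.
have := congr1 (fun p : {poly L} => p`_1) P0.
have m0' : (0 < m)%N by lia.
rewrite coef0 /P coef_sumMXn (bigD1 (Ordinal m0')) /= ?expn0 // big1 ?addr0 //.
move=> k /andP[hk nk].
have : (Q ^ k == Q ^ 0)%N by rewrite expn0.
rewrite eqn_exp2l // => /eqP k0.
by exfalso; move: nk; apply/negP; rewrite negbK; apply/eqP; apply: val_inj.
Qed.

Lemma preim (F L : finFieldType) (iota : {rmorphism F -> L}) (Q : nat) :
  #|F| = Q -> (1 < Q)%N -> forall w : L, w ^+ Q = w -> exists f, iota f = w.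
Proof.
move=> FQ Q1 w hw.
case: (boolP [exists f, iota f == w]) => [/existsP[f /eqP <-]|]; first by exists f.
rewrite negb_exists => /forallP hf; exfalso.
pose P : {poly L} := 'X^Q - 'X.
have szP : size P = Q.+1.
  rewrite /P size_addl ?size_polyXn // size_opp size_polyX; lia.
have rP : forall z : L, z ^+ Q = z -> root P z.
  by move=> z hz; rewrite /root /P hornerD hornerN hornerXn hornerX hz subrr.
have key : (size (w :: [seq iota f | f <- enum F]) < size P)%N.
  apply: max_poly_roots.
  - by rewrite -size_poly_eq0 szP.
  - rewrite /= rP //=; apply/allP => z /mapP[f _ ->]; apply: rP.
    by rewrite -rmorphXn -FQ expf_card.
  - rewrite /= map_inj_uniq ?enum_uniq ?andbT; last exact: fmorph_inj.
    by apply/mapP => -[f _ e]; move: (hf f); rewrite e eqxx.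
by move: key; rewrite szP /= size_map -cardE FQ ltnn.
Qed.

Definition tr (L : fieldType) (a : L) (m Q w : nat) : L := \sum_(k < m) a ^+ (w * Q ^ k).

Lemma shift_sum (L : fieldType) (m : nat) (f : nat -> L) : (0 < m)%N -> f m = f 0%N ->
  \sum_(k < m) f k.+1 = \sum_(k < m) f k.
Proof.
case: m => // m _ e.
by rewrite big_ord_recr big_ord_recl /= e addrC.
Qed.

Lemma tr_fix (L : fieldType) (a : L) (m Q w : nat) : (0 < m)%N -> [pchar L].-nat Q ->
  (Q ^ m - 1).-primitive_root a -> (0 < Q)%N -> tr a m Q w ^+ Q = tr a m Q w.
Proof.
move=> m0 hQ pa Q0; rewrite /tr frob_sum //.
under eq_bigr => k _ do rewrite -exprM -mulnA -expnSr.
rewrite -[RHS](@shift_sum _ _ (fun k => a ^+ (w * Q ^ k)) m0) //=.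
apply: (expr_cong pa).
have h1 : (Q ^ m = 1 %[mod Q ^ m - 1])%N.
  have e : (Q ^ m = (Q ^ m - 1) + 1)%N.
    have : (0 < Q ^ m)%N by rewrite expn_gt0 Q0.
    lia.
  by rewrite {1}e modnDl.
by rewrite expn0 muln1 -modnMmr h1 modnMmr muln1.
Qed.

Lemma TRsum (L : fieldType) (al : L) (n m Q : nat) (v : 'I_n -> 'I_n -> L) (g a b : nat) :
 \sum_(i < n) \sum_(j < n) v i j * tr al m Q (g + a * i + b * j) =
 \sum_(k < m) al ^+ (g * Q ^ k) * \sum_(i < n) \sum_(j < n) v i j * al ^+ (a * Q ^ k * i) * al ^+ (b * Q ^ k * j).
Proof.
rewrite /tr.
under eq_bigr => i _ do under eq_bigr => j _ do rewrite mulr_sumr.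
under eq_bigr => i _ do rewrite exchange_big.
rewrite exchange_big; apply: eq_bigr => k _.
rewrite mulr_sumr; apply: eq_bigr => i _.
rewrite mulr_sumr; apply: eq_bigr => j _.
have -> : ((g + a * i + b * j) * Q ^ k = g * Q ^ k + a * Q ^ k * i + b * Q ^ k * j)%N.
  rewrite !mulnDl; lia.
rewrite !exprD; ring.
Qed.

Lemma geo2 (L : fieldType) (al : L) (n x y a b : nat) : n.-primitive_root al ->
  \sum_(i < n) \sum_(j < n) al ^+ (x * i) * al ^+ (y * j) * al ^+ (a * i) * al ^+ (b * j) =
  (if (n %| a + x)%N then n%:R else 0) * (if (n %| b + y)%N then n%:R else 0).
Proof.
move=> pa; rewrite -(geo _ pa) -(geo _ pa) mulr_suml; apply: eq_bigr => i _.
rewrite mulr_sumr; apply: eq_bigr => j _.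
rewrite !mulnDl !exprD; ring.
Qed.

Definition pre (F L : finFieldType) (iota : {rmorphism F -> L}) (w : L) : F :=
  odflt 0 [pick f | iota f == w].

Lemma preP (F L : finFieldType) (iota : {rmorphism F -> L}) (w : L) :
  (exists f, iota f = w) -> iota (pre iota w) = w.
Proof.
move=> [f hf]; rewrite /pre; case: pickP => [f' /eqP //|/(_ f)].
by rewrite hf eqxx.
Qed.

Definition trm (F L : finFieldType) (iota : {rmorphism F -> L}) (alpha : L) (q m g a b : nat) :
  'M[F]_(q ^ (2 * m) - 1) :=
  \matrix_(i, j) pre iota (tr alpha m (q ^ 2) (g + a * i + b * j)).

Lemma iota_trm (F L : finFieldType) (iota : {rmorphism F -> L}) (alpha : L) (q m g a b : nat) i j :
  (1 < q)%N -> (0 < m)%N -> #|F| = (q ^ 2)%N -> [pchar L].-nat q ->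
  (q ^ (2 * m) - 1).-primitive_root alpha ->
  iota (trm iota alpha q m g a b i j) = tr alpha m (q ^ 2) (g + a * i + b * j).
Proof.
move=> q1 m0 FQ hq pa; rewrite mxE; apply: preP.
apply: (preim iota FQ); first by rewrite (ltn_exp2l 0 2 q1).
apply: tr_fix => //.
- by rewrite pnatX hq.
- by rewrite -expnM.
- by rewrite expn_gt0; lia.
Qed.

Definition G (L : fieldType) (n z : nat) : L := if (n %| z)%N then n%:R else 0.

Lemma bieval_trm (F L : finFieldType) (iota : {rmorphism F -> L}) (alpha : L) (q m g a b x y : nat) :
  (1 < q)%N -> (0 < m)%N -> #|F| = (q ^ 2)%N -> [pchar L].-nat q ->
  (q ^ (2 * m) - 1).-primitive_root alpha ->
  bieval iota alpha (trm iota alpha q m g a b) x y =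
  \sum_(k < m) alpha ^+ (g * (q ^ 2) ^ k) *
    (G L (q ^ (2 * m) - 1) (a * (q ^ 2) ^ k + x) * G L (q ^ (2 * m) - 1) (b * (q ^ 2) ^ k + y)).
Proof.
move=> q1 m0 FQ hq pa; rewrite /bieval.
under eq_bigr => i _ do under eq_bigr => j _ do
  rewrite (iota_trm _ _ _ _ _ _ q1 m0 FQ hq pa) -mulrA mulrC.
rewrite (TRsum alpha m (q ^ 2) (fun i j => alpha ^+ (x * i) * alpha ^+ (y * j))).
apply: eq_bigr => k _; congr (_ * _).
by rewrite /G -(geo2 _ _ _ _ pa).
Qed.

Lemma tr_frob (L : fieldType) (al : L) (m Q q w : nat) : [pchar L].-nat q ->
  tr al m Q w ^+ q = tr al m Q (w * q).
Proof.
move=> hq; rewrite /tr frob_sum //; apply: eq_bigr => k _.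
by rewrite -exprM; congr (_ ^+ _); rewrite mulnAC.
Qed.

Lemma hdual_trm (F L : finFieldType) (iota : {rmorphism F -> L}) (alpha : L) (q m g a b : nat)
  (c : 'M[F]_(q ^ (2 * m) - 1)) :
  (1 < q)%N -> (0 < m)%N -> #|F| = (q ^ 2)%N -> [pchar L].-nat q ->
  (q ^ (2 * m) - 1).-primitive_root alpha ->
  iota (\sum_i \sum_j (trm iota alpha q m g a b i j) ^+ q * c i j) =
  \sum_(k < m) alpha ^+ (g * q * (q ^ 2) ^ k) *
     bieval iota alpha c (a * q * (q ^ 2) ^ k) (b * q * (q ^ 2) ^ k).
Proof.
move=> q1 m0 FQ hq pa.
rewrite rmorph_sum.
under eq_bigr => i _ do rewrite rmorph_sum.
under eq_bigr => i _ do under eq_bigr => j _ do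
  rewrite rmorphM rmorphXn (iota_trm _ _ _ _ _ _ q1 m0 FQ hq pa) tr_frob // mulrC.
have e : forall (i j : nat), ((g + a * i + b * j) * q = g * q + (a * q) * i + (b * q) * j)%N.
  by move=> i j; rewrite !mulnDl; lia.
under eq_bigr => i _ do under eq_bigr => j _ do rewrite e.
rewrite (TRsum alpha m (q ^ 2) (fun i j => iota (c i j))).
apply: eq_bigr => k _; congr (_ * _).
Qed.

Lemma defset_mul (Q n d X Y j : nat) : in_defset Q n d X Y ->
  in_defset Q n d (X * Q ^ j %% n) (Y * Q ^ j %% n).
Proof.
move=> [x0 [y0 [k [hz -> ->]]]]; exists x0, y0, (k + j)%N; split => //.
- by rewrite modnMml -mulnA -expnD.
- by rewrite modnMml -mulnA -expnD.
Qed.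

Lemma defset_lt (Q n d X Y : nat) : (0 < n)%N -> in_defset Q n d X Y -> (X < n)%N /\ (Y < n)%N.
Proof. by move=> n0 [x0 [y0 [k [_ -> ->]]]]; rewrite !ltn_pmod. Qed.

Lemma dir1 (q m d : nat) (F L : finFieldType) (iota : {rmorphism F -> L}) (alpha : L) :
  (1 < q)%N -> (1 < m)%N -> #|F| = (q ^ 2)%N -> [pchar L].-nat q ->
  (q ^ (2 * m) - 1).-primitive_root alpha ->
  ~ Bad q m d ->
  forall u, in_hdual q (in_hypcode iota alpha q d (n := q ^ (2 * m) - 1)) u ->
    in_hypcode iota alpha q d (n := q ^ (2 * m) - 1) u.
Proof.
move=> q1 m1 FQ hq pa nB u hu X Y hXY.
have m0 : (0 < m)%N by lia.
pose V (k : nat) : L := \sum_(i < q ^ (2 * m) - 1) \sum_(j < q ^ (2 * m) - 1)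
   iota (u i j) ^+ q * alpha ^+ (q * X * (q ^ 2) ^ k * i) * alpha ^+ (q * Y * (q ^ 2) ^ k * j).
have HC : forall g, in_hypcode iota alpha q d (n := q ^ (2 * m) - 1) (trm iota alpha q m g (q * X) (q * Y)).
  move=> g s t hst.
  rewrite (bieval_trm iota _ _ _ _ _ q1 m0 FQ hq pa).
  apply: big1 => k _.
  rewrite /G; case: ifP => h1; case: ifP => h2; rewrite ?mulr0 ?mul0r ?mulr0 //.
  exfalso; apply: nB.
  exists (X * (q ^ 2) ^ k %% (q ^ (2 * m) - 1))%N, (Y * (q ^ 2) ^ k %% (q ^ (2 * m) - 1))%N, s, t.
  split => //; first exact: defset_mul.
  - by rewrite /dvdn -modnDmr modnMmr modnDmr mulnA addnC; rewrite /dvdn in h1.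
  - by rewrite /dvdn -modnDmr modnMmr modnDmr mulnA addnC; rewrite /dvdn in h2.
have Hg : forall g : nat, (g < (q ^ 2) ^ m - 1)%N -> \sum_(k < m) V k * alpha ^+ (g * (q ^ 2) ^ k) = 0.
  move=> g0 _.
  have h := hu _ (HC g0).
  transitivity (iota (\sum_i \sum_j u i j ^+ q * trm iota alpha q m g0 (q * X) (q * Y) i j)); last first.
    by rewrite h rmorph0.
  rewrite rmorph_sum.
  under [RHS]eq_bigr => i _ do rewrite rmorph_sum.
  under [RHS]eq_bigr => i _ do under eq_bigr => j _ do
    rewrite rmorphM rmorphXn (iota_trm iota _ _ _ _ _ q1 m0 FQ hq pa).
  rewrite (TRsum alpha m (q ^ 2) (fun i j => iota (u i j) ^+ q)).
  apply: eq_bigr => k _; by rewrite mulrC.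
have pa' : ((q ^ 2) ^ m - 1).-primitive_root alpha by rewrite -expnM.
have q21 : (1 < q ^ 2)%N by rewrite (ltn_exp2l 0 2 q1).
have V0 := nz_lemma q21 m1 pa' Hg.
have : bieval iota alpha u X Y ^+ q = 0.
  rewrite -[RHS]V0 /bieval /V frob_sum //; apply: eq_bigr => i _.
  rewrite frob_sum //; apply: eq_bigr => j _.
  rewrite !exprMn -!exprM expn0 !muln1; congr (_ * _ ^+ _ * _ ^+ _); lia.
by move/eqP; rewrite expf_eq0 => /andP[_ /eqP].
Qed.

Lemma dir2 (q m d : nat) (F L : finFieldType) (iota : {rmorphism F -> L}) (alpha : L) :
  (1 < q)%N -> (1 < m)%N -> #|F| = (q ^ 2)%N -> [pchar L].-nat q ->
  (q ^ (2 * m) - 1).-primitive_root alpha -> ((q ^ (2 * m) - 1)%:R : L) != 0 ->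
  Bad q m d ->
  ~ (forall u, in_hdual q (in_hypcode iota alpha q d (n := q ^ (2 * m) - 1)) u ->
    in_hypcode iota alpha q d (n := q ^ (2 * m) - 1) u).
Proof.
move=> q1 m1 FQ hq pa nz [X [Y [s [t [hXY hst ds dt]]]]] H.
have m0 : (0 < m)%N by lia.
set n := (q ^ (2 * m) - 1)%N in ds dt nz.
have n0 : (0 < n)%N by rewrite lt0n; apply: contraNneq nz => ->.
have [Xn Yn] := defset_lt n0 hXY.
set a := (n - X)%N. set b := (n - Y)%N.
have cong : forall (a0 X0 s0 : nat), (X0 < n)%N -> a0 = (n - X0)%N -> (n %| s0 + q * X0)%N ->
    forall k, (a0 * q * (q ^ 2) ^ k = s0 * (q ^ 2) ^ k %% n %[mod n])%N.
  move=> a0 X0 s0 hX0 -> hs k.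
  rewrite modn_mod; apply: modMr.
  apply/eqP; rewrite -(eqn_modDr (q * X0)).
  have -> : ((n - X0) * q + q * X0 = n * q)%N.
    by rewrite mulnBl (mulnC q X0) subnK // leq_mul2r ltnW ?orbT.
  by rewrite modnMr; move: hs; rewrite /dvdn => /eqP ->.
have HU : forall g, in_hdual q (in_hypcode iota alpha q d (n := q ^ (2 * m) - 1)) (trm iota alpha q m g a b).
  move=> g c hc.
  apply: (fmorph_inj iota); rewrite rmorph0 (hdual_trm iota _ _ _ c q1 m0 FQ hq pa).
  apply: big1 => k _.
  rewrite (bieval_cong _ _ pa (cong _ _ _ Xn erefl ds k) (cong _ _ _ Yn erefl dt k)).
  by rewrite hc ?mulr0 //; apply: defset_mul.
have Hg : forall g : nat, (g < (q ^ 2) ^ m - 1)%N ->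
    \sum_(k < m) (G L n (a * (q ^ 2) ^ k + X) * G L n (b * (q ^ 2) ^ k + Y)) * alpha ^+ (g * (q ^ 2) ^ k) = 0.
  move=> g _.
  have := H _ (HU g) X Y hXY.
  rewrite (bieval_trm iota _ _ _ _ _ q1 m0 FQ hq pa) => h.
  rewrite -[RHS]h; apply: eq_bigr => k _; by rewrite mulrC.
have pa' : ((q ^ 2) ^ m - 1).-primitive_root alpha by rewrite -expnM.
have q21 : (1 < q ^ 2)%N by rewrite (ltn_exp2l 0 2 q1).
have := nz_lemma (V := fun k => G L n (a * (q ^ 2) ^ k + X) * G L n (b * (q ^ 2) ^ k + Y)) q21 m1 pa' Hg.
rewrite /G expn0 !muln1 /a /b !subnK ?dvdnn; try exact: ltnW.
by move/eqP; rewrite mulf_eq0 orbb (negbTE nz).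
Qed.

End Alg.
Import Alg.

Local Open Scope ring_scope.

Theorem theorem10 (q m d : nat) (F L : finFieldType)
  (iota : {rmorphism F -> L}) (alpha : L) :
  prime_power q -> (3 < m)%N -> (2 <= d)%N -> #|F| = (q ^ 2)%N ->
  (q ^ (2 * m) - 1)%N.-primitive_root alpha ->
  let n := (q ^ (2 * m) - 1)%N in
  let C := in_hypcode iota alpha q d (n := n) in
  ((forall u : 'M[F]_n, in_hdual q C u -> C u) <-> (d <= delta_h q m)%N).
Proof.
move=> [p [k [pp k0 qe]]] m3 d2 FQ pa n C.
have p2 : (1 < p)%N by apply: prime_gt1.
have q2 : (1 < q)%N by rewrite qe -{1}(expn0 p) ltn_exp2l.
have m1 : (1 < m)%N by apply: ltn_trans m3.
have pF : p \in [pchar F].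
  apply: (card_finPcharP (n := (k * 2)%N)) => //; by rewrite FQ qe -expnM.
have pL : p \in [pchar L] := rmorph_pchar iota pF.
have hq : [pchar L].-nat q by rewrite qe pnatX (pnatE _ pp) pL.
have nz : ((q ^ (2 * m) - 1)%:R : L) != 0.
  have h0 : ((q ^ (2 * m))%:R : L) = 0.
    by rewrite natrX qe natrX (pcharf0 pL) expr0n (negbTE (lt0n_neq0 k0)) /= expr0n muln_eq0 /= (negbTE (lt0n_neq0 (ltnW m1))).
  have e : (q ^ (2 * m) = (q ^ (2 * m) - 1) + 1)%N.
    by rewrite subnK // expn_gt0 (ltnW q2).
  rewrite e natrD in h0; apply/eqP => h; move: h0; rewrite h add0r => /eqP; by rewrite oner_eq0.
split.
- move=> Hc. rewrite leqNgt; apply/negP => hlt.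
  exact: (dir2 q2 m1 FQ hq pa nz (lt_bad q2 m3 hlt) Hc).
- move=> hd. apply: (dir1 q2 m1 FQ hq pa) => hB.
  have := bad_lt q2 m3 hB. by rewrite ltnNge hd.
Qed.
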